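(* Let $\alpha,\beta\in[0,1]$ with $\alpha+\beta=1$, let $0<\delta<1/2$, and let $\xi$ be a real number with $\inf_{n\in\mathbb{N}} n\|n\xi\|\geqslant\delta$. Then for every positive integer $p$, $$\#\Big\{x\in\mathbb{N}:\ p<x\leqslant 2p,\ \|x\xi\|\leqslant \frac{\delta}{(p\log(p+1))^\beta}\Big\}\leqslant \frac{(24\delta+2)\,p^\alpha}{(\log(p+1))^\beta}.$$
   Context: $\|t\|$ denotes the distance from the real number $t$ to the nearest integer; $\log$ is the natural logarithm. *)

(* Defs.v *)
From Stdlib Require Import Reals Lra Lia List.
Open Scope R_scope.

Definition dist_int (t : R) : R :=
  Rmin (t - IZR (Int_part t)) (IZR (Int_part t) + 1 - t).

Definition count_close (xi bound : R) (p : nat) : nat :=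
  length (filter (fun x : nat => if Rle_dec (dist_int (INR x * xi)) bound then true else false)
                 (seq (S p) p)).

(* Main.v *)
Require Import Defs.
From Stdlib Require Import Reals Lra Lia List ZArith Classical.
Open Scope R_scope.

Definition near (t:R) : Z :=
  if Rle_dec (t - IZR (Int_part t)) (IZR (Int_part t) + 1 - t)
  then Int_part t else (Int_part t + 1)%Z.

Lemma dist_near t : dist_int t = Rabs (t - IZR (near t)).
Proof.
  unfold dist_int, near, Rmin.
  destruct (base_Int_part t) as [H1 H2].
  destruct (Rle_dec _ _).
  - rewrite Rabs_right; lra.
  - rewrite plus_IZR. rewrite Rabs_left1; simpl; lra.
Qed.

Lemma dist_le t m : dist_int t <= Rabs (t - IZR m).
Proof.
  unfold dist_int.
  destruct (base_Int_part t) as [H1 H2].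
  destruct (Z_le_gt_dec m (Int_part t)) as [Hm|Hm].
  - apply IZR_le in Hm. eapply Rle_trans; [apply Rmin_l|].
    rewrite Rabs_right; lra.
  - assert (Hm' : (Int_part t + 1 <= m)%Z) by lia.
    apply IZR_le in Hm'. rewrite plus_IZR in Hm'.
    eapply Rle_trans; [apply Rmin_r|].
    rewrite Rabs_left1; simpl in *; lra.
Qed.

Lemma IZR_abs_ge1 z : z <> 0%Z -> 1 <= Rabs (IZR z).
Proof.
  intro Hz. destruct (Z_le_gt_dec z 0) as [H|H].
  - assert (z <= -1)%Z by lia. apply IZR_le in H0.
    rewrite Rabs_left1; simpl in *; lra.
  - assert (1 <= z)%Z by lia. apply IZR_le in H0.
    rewrite Rabs_right; simpl in *; lra.
Qed.

Fixpoint pg (g : R) (l : list nat) : Prop :=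
  match l with
  | nil => True
  | x :: l' => (forall y, In y l' -> INR x + g <= INR y) /\ pg g l'
  end.

Lemma chain (g : R) (hg : 0 < g) : forall l (lo hi : R), lo <= hi ->
  (forall x, In x l -> lo <= INR x <= hi) -> pg g l ->
  INR (length l) * g <= hi - lo + g.
Proof.
  induction l as [|x l IH]; intros lo hi Hlh Hin Hpg.
  - simpl. lra.
  - destruct Hpg as [Hx Hl].
    destruct l as [|y l'].
    + simpl. specialize (Hin x (or_introl eq_refl)). lra.
    + assert (Hy := Hx y (or_introl eq_refl)).
      assert (Hiny := Hin y (or_intror (or_introl eq_refl))).
      assert (Hinx := Hin x (or_introl eq_refl)).
      specialize (IH (INR x + g) hi ltac:(lra)).
      assert (H := IH (fun z hz => conj (Hx z hz) (proj2 (Hin z (or_intror hz)))) Hl).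
      change (length (x :: y :: l')) with (S (length (y :: l'))).
      rewrite S_INR. lra.
Qed.
Lemma pg_filter (g:R) (P : nat -> bool) : forall n s,
 (forall x y, In x (filter P (seq s n)) -> In y (filter P (seq s n)) -> (x<y)%nat -> g <= INR y - INR x) ->
 pg g (filter P (seq s n)).
Proof.
  induction n as [|n IH]; intros s H.
  - simpl. exact I.
  - simpl seq in *. simpl filter in *. destruct (P s) eqn:Ps.
    + simpl. split.
      * intros y Hy. assert (Hy' := Hy). apply filter_In in Hy' as [Hy1 _].
        apply in_seq in Hy1.
        assert (g <= INR y - INR s). { apply H; [left; reflexivity| right; exact Hy | lia]. }
        lra.
      * apply IH. intros x y Hx Hy. apply H; right; assumption.
    + apply IH. exact H.
Qed.

Lemma fin (K T c p : R) : 0 < T -> K * T <= c * p -> K <= c * p / T.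
Proof.
  intros hT H. apply (Rmult_le_reg_r T); [lra|].
  replace (c * p / T * T) with (c * p) by (field; lra). exact H.
Qed.

Lemma core (delta xi T : R) (p : nat) (hT : 0 < T) (hd : 0 < delta)
  (hxi : forall n : nat, (1 <= n)%nat -> delta <= INR n * dist_int (INR n * xi))
  (hp : (1 <= p)%nat) :
  INR (count_close xi (delta / T) p) <= (24 * delta + 2) * INR p / T.
Proof.
  set (b := delta / T).
  set (P := fun x : nat => if Rle_dec (dist_int (INR x * xi)) b then true else false).
  unfold count_close. fold b. fold P.
  set (L := filter P (seq (S p) p)).
  assert (HinL : forall x, In x L -> (S p <= x <= 2 * p)%nat /\ dist_int (INR x * xi) <= b).
  { intros x Hx. apply filter_In in Hx as [H1 H2]. apply in_seq in H1.
    split; [lia|]. unfold P in H2. destruct (Rle_dec _ _); [assumption | discriminate]. }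
  assert (Hp : 1 <= INR p) by (apply (le_INR 1); exact hp).
  assert (HbT : b * T = delta) by (unfold b; field; lra).
  assert (Hb : 0 < b) by (unfold b; apply Rdiv_lt_0_compat; lra).
  assert (He : forall x, In x L -> Rabs (INR x * xi - IZR (near (INR x * xi))) <= b).
  { intros x Hx. rewrite <- dist_near. apply (HinL x Hx). }
  assert (Hrange : forall x, In x L -> INR p + 1 <= INR x <= 2 * INR p).
  { intros x Hx. destruct (HinL x Hx) as [[H1 H2] _].
    apply le_INR in H1, H2. rewrite S_INR in H1. rewrite mult_INR in H2. simpl in H2. lra. }
  assert (Hsingle : forall x, In x L -> T <= 2 * INR p).
  { intros x Hx. destruct (HinL x Hx) as [[H1 H2] Hd].
    assert (H := hxi x ltac:(lia)). destruct (Hrange x Hx) as [R1 R2].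
    assert (INR x * dist_int (INR x * xi) <= 2 * INR p * b).
    { apply Rmult_le_compat; try lra. rewrite dist_near; apply Rabs_pos. }
    nra. }
  assert (Hgap0 : forall x y, In x L -> In y L -> (x < y)%nat ->
     let n := (y - x)%nat in INR n = INR y - INR x /\ (1 <= n)%nat /\
     dist_int (INR n * xi) <= Rabs ((INR y * xi - IZR (near (INR y * xi))) - (INR x * xi - IZR (near (INR x * xi))))).
  { intros x y Hx Hy Hxy n. split; [unfold n; apply minus_INR; lia|]. split; [unfold n; lia|].
    eapply Rle_trans; [apply (dist_le _ (near (INR y * xi) - near (INR x * xi))%Z)|].
    rewrite minus_IZR. unfold n; rewrite minus_INR by lia. right. f_equal. ring. }
  assert (HLdef : L = filter P (seq (S p) p)) by reflexivity. clearbody L.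
  assert (HLc : L = nil \/ exists M rest, L = M :: rest) by (destruct L; eauto).
  destruct HLc as [HL | [M [rest HL]]].
  - rewrite HL. simpl. apply Rmult_le_pos; [|left; apply Rinv_0_lt_compat; lra]. nra.
  - assert (HM : In M L) by (rewrite HL; left; reflexivity).
    set (mM := near (INR M * xi)).
    destruct (classic (exists x, In x L /\ INR x * IZR mM <> INR M * IZR (near (INR x * xi)))) as [[x [Hx Hne]] | Hall].
    +
      assert (H1 : 1 <= 4 * INR p * b).
      { set (z := (Z.of_nat x * mM - Z.of_nat M * near (INR x * xi))%Z).
        assert (Hz : IZR z = INR x * IZR mM - INR M * IZR (near (INR x * xi))).
        { unfold z. rewrite minus_IZR, !mult_IZR, <- !INR_IZR_INZ. reflexivity. }
        assert (Hz0 : z <> 0%Z). { intro E. apply Hne. rewrite E in Hz. simpl in Hz. lra. }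
        assert (Hz1 := IZR_abs_ge1 z Hz0).
        assert (Eq : IZR z = - (INR x * (INR M * xi - IZR mM) - INR M * (INR x * xi - IZR (near (INR x * xi))))).
        { rewrite Hz. ring. }
        rewrite Eq, Rabs_Ropp in Hz1.
        assert (A1 := He M HM). assert (A2 := He x Hx). fold mM in A1.
        destruct (Hrange M HM). destruct (Hrange x Hx).
        assert (Rabs (INR x * (INR M * xi - IZR mM)) <= 2 * INR p * b).
        { rewrite Rabs_mult, Rabs_right by lra. apply Rmult_le_compat; try lra. apply Rabs_pos. }
        assert (Rabs (INR M * (INR x * xi - IZR (near (INR x * xi)))) <= 2 * INR p * b).
        { rewrite Rabs_mult, Rabs_right by lra. apply Rmult_le_compat; try lra. apply Rabs_pos. }
        assert (T3 := Rabs_triang (INR x * (INR M * xi - IZR mM)) (- (INR M * (INR x * xi - IZR (near (INR x * xi)))))).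
        rewrite Rabs_Ropp in T3. unfold Rminus in *. lra. }
      assert (Hgap : forall x y, In x L -> In y L -> (x < y)%nat -> T / 2 <= INR y - INR x).
      { intros u v Hu Hv Huv. destruct (Hgap0 u v Hu Hv Huv) as [En [Hn Hdn]].
        set (n := (v - u)%nat) in *.
        assert (Hdel := hxi n Hn).
        assert (Au := He u Hu). assert (Av := He v Hv).
        assert (T3 := Rabs_triang (INR v * xi - IZR (near (INR v * xi))) (- (INR u * xi - IZR (near (INR u * xi))))).
        rewrite Rabs_Ropp in T3.
        assert (Hn0 : 0 <= INR n) by apply pos_INR.
        assert (dist_int (INR n * xi) <= 2 * b) by (unfold Rminus in *; lra).
        assert (delta <= INR n * (2 * b)) by (eapply Rle_trans; [exact Hdel|]; apply Rmult_le_compat_l; lra).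
        rewrite <- En. nra. }
      assert (Hpg : pg (T/2) L).
      { rewrite HLdef. apply pg_filter. rewrite <- HLdef. exact Hgap. }
      assert (Hc := chain (T/2) ltac:(lra) L (INR p + 1) (2 * INR p) ltac:(lra) Hrange Hpg).
      apply fin; [lra|].
      assert (T <= 4 * INR p * delta) by (rewrite <- HbT; nra).
      assert (0 <= INR p * delta) by nra.
      lra.
    + assert (Hpar : forall x, In x L -> INR x * IZR mM = INR M * IZR (near (INR x * xi))).
      { intros x Hx. destruct (Req_dec (INR x * IZR mM) (INR M * IZR (near (INR x * xi)))) as [E|E];
        [exact E| exfalso; apply Hall; eauto]. }
      destruct (Hrange M HM) as [RM1 RM2].
      assert (AM := He M HM). fold mM in AM.
      assert (Hgap : forall x y, In x L -> In y L -> (x < y)%nat -> sqrt (T * INR p) <= INR y - INR x).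
      { intros u v Hu Hv Huv. destruct (Hgap0 u v Hu Hv Huv) as [En [Hn Hdn]].
        set (n := (v - u)%nat) in *.
        assert (Hdel := hxi n Hn).
        assert (Pu := Hpar u Hu). assert (Pv := Hpar v Hv).
        assert (Eq : INR M * ((INR v * xi - IZR (near (INR v * xi))) - (INR u * xi - IZR (near (INR u * xi))))
                     = INR n * (INR M * xi - IZR mM)).
        { rewrite En. nra. }
        assert (Hn0 : 0 <= INR n) by apply pos_INR.
        assert (Eq2 : INR M * Rabs ((INR v * xi - IZR (near (INR v * xi))) - (INR u * xi - IZR (near (INR u * xi))))
                     = INR n * Rabs (INR M * xi - IZR mM)).
        { rewrite <- (Rabs_right (INR M) ltac:(lra)) at 1. rewrite <- (Rabs_right (INR n)) by lra.
          rewrite <- !Rabs_mult. rewrite Eq. reflexivity. }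
        set (r := Rabs ((INR v * xi - IZR (near (INR v * xi))) - (INR u * xi - IZR (near (INR u * xi))))) in *.
        set (eM := Rabs (INR M * xi - IZR mM)) in *.
        assert (delta <= INR n * r) by (eapply Rle_trans; [exact Hdel|]; apply Rmult_le_compat_l; lra).
        assert (delta * INR M <= INR n * INR n * b) by nra.
        assert (T * INR p <= INR n * INR n) by (rewrite <- HbT in *; nra).
        rewrite <- En. rewrite <- (sqrt_square (INR n)) by lra. apply sqrt_le_1_alt. exact H1. }
      assert (Hpg : pg (sqrt (T * INR p)) L).
      { rewrite HLdef. apply pg_filter. rewrite <- HLdef. exact Hgap. }
      assert (Hg : 0 < sqrt (T * INR p)) by (apply sqrt_lt_R0; nra).
      assert (Hg2 := sqrt_sqrt (T * INR p) ltac:(nra)).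
      assert (Hc := chain _ Hg L (INR p + 1) (2 * INR p) ltac:(lra) Hrange Hpg).
      apply fin; [lra|].
      assert (HS := Hsingle M HM).
      assert (0 <= INR p * delta) by nra.
      rewrite HL in Hc |- *. destruct rest as [|y rest'].
      * simpl. lra.
      * change (length (M :: y :: rest')) with (S (S (length rest'))) in *.
        rewrite !S_INR in *. assert (Hk := pos_INR (length rest')).
        set (K := INR (length rest')) in *.
        set (g := sqrt (T * INR p)) in *.
        assert (Hk1 : (K + 1) * g <= INR p - 1) by lra.
        assert (Hsq : (K + 1) * (K + 1) * (T * INR p) <= (INR p - 1) * (INR p - 1)).
        { rewrite <- Hg2. assert (0 <= (K+1) * g) by nra. nra. }
        assert (Hlt : (K + 1) * (K + 1) * T < INR p) by nra.
        nra.
Qed.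

Theorem lemma2 (alpha beta delta xi : R)
  (halpha : 0 <= alpha <= 1) (hbeta : 0 <= beta <= 1) (hab : alpha + beta = 1)
  (hdelta : 0 < delta < 1 / 2)
  (hxi : forall n : nat, (1 <= n)%nat -> delta <= INR n * dist_int (INR n * xi))
  (p : nat) (hp : (1 <= p)%nat) :
  INR (count_close xi (delta / Rpower (INR p * ln (INR p + 1)) beta) p)
    <= (24 * delta + 2) * Rpower (INR p) alpha / Rpower (ln (INR p + 1)) beta.
Proof.
  assert (Hp : 1 <= INR p) by (apply (le_INR 1); exact hp).
  assert (HL : 0 < ln (INR p + 1)) by (rewrite <- ln_1; apply ln_increasing; lra).
  assert (HT : 0 < Rpower (INR p * ln (INR p + 1)) beta) by (unfold Rpower; apply exp_pos).
  assert (H := core delta xi _ p HT (proj1 hdelta) hxi hp).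
  assert (E1 : Rpower (INR p * ln (INR p + 1)) beta = Rpower (INR p) beta * Rpower (ln (INR p + 1)) beta).
  { unfold Rpower. rewrite ln_mult by lra. rewrite Rmult_plus_distr_l, exp_plus. reflexivity. }
  assert (E2 : INR p = Rpower (INR p) alpha * Rpower (INR p) beta).
  { rewrite <- Rpower_plus, hab, Rpower_1 by lra. reflexivity. }
  assert (P1 : 0 < Rpower (INR p) beta) by (unfold Rpower; apply exp_pos).
  assert (P2 : 0 < Rpower (ln (INR p + 1)) beta) by (unfold Rpower; apply exp_pos).
  eapply Rle_trans; [exact H|]. right.
  rewrite E1. rewrite E2 at 1. field. lra.
Qed.
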